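(* Let $A$ be a cyclic Leibniz algebra generated by $a$, with notation as in the context. The maximal subalgebras of $A$ are precisely the null spaces $\{b\in A: r_j(L_a)(b)=0\}$, where $r_j(x)=p(x)/p_j(x)$, for $j=1,\dots,s$.
   Context: A (left) Leibniz algebra is an algebra satisfying $x(yz)=(xy)z+y(xz)$ for all $x,y,z$; all algebras are finite-dimensional over a field $F$. $A$ is a cyclic Leibniz algebra generated by $a$: $A$ is generated as an algebra by the single element $a$, and with $a^1=a$, $a^{k+1}=aa^k$, the elements $a,a^2,\dots,a^n$ form a basis of $A$. Write $aa^n=\alpha_2a^2+\cdots+\alpha_na^n$. $L_a:A\to A$ is $b\mapsto ab$, with characteristic (and minimal) polynomial $p(x)=x^n-\alpha_nx^{n-1}-\cdots-\alpha_2x=p_1(x)^{n_1}\cdots p_s(x)^{n_s}$, the $p_j$ distinct monic irreducibles over $F$, $p_1(x)=x$. *)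

(* Defs.v *)
From HB Require Import structures.
From mathcomp Require Import all_boot all_order all_algebra.
Set Implicit Arguments. Unset Strict Implicit. Unset Printing Implicit Defensive.
Import Order.TTheory GRing.Theory Num.Theory.
Local Open Scope ring_scope.

(* A finite-dimensional algebra over F of dimension d is modelled by the
   carrier 'rV[F]_d with a multiplication mul : A -> A -> A. *)

Definition bilinear_mul (F : fieldType) (d : nat)
  (mul : 'rV[F]_d -> 'rV[F]_d -> 'rV[F]_d) : Prop :=
  (forall (k : F) x y z, mul (k *: x + y) z = k *: mul x z + mul y z) /\
  (forall (k : F) x y z, mul x (k *: y + z) = k *: mul x y + mul x z).

Definition left_leibniz (F : fieldType) (d : nat)
  (mul : 'rV[F]_d -> 'rV[F]_d -> 'rV[F]_d) : Prop :=
  forall x y z, mul x (mul y z) = mul (mul x y) z + mul y (mul x z).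

Definition is_subalgebra (F : fieldType) (d : nat)
  (mul : 'rV[F]_d -> 'rV[F]_d -> 'rV[F]_d) (U : {vspace 'rV[F]_d}) : Prop :=
  forall x y, x \in U -> y \in U -> mul x y \in U.

Definition is_maximal_subalgebra (F : fieldType) (d : nat)
  (mul : 'rV[F]_d -> 'rV[F]_d -> 'rV[F]_d) (U : {vspace 'rV[F]_d}) : Prop :=
  [/\ is_subalgebra mul U, U != fullv &
      forall V : {vspace 'rV[F]_d}, is_subalgebra mul V -> (U <= V)%VS ->
        V = U \/ V = fullv].

Definition generated_by (F : fieldType) (d : nat)
  (mul : 'rV[F]_d -> 'rV[F]_d -> 'rV[F]_d) (a : 'rV[F]_d) : Prop :=
  forall U : {vspace 'rV[F]_d}, is_subalgebra mul U -> a \in U -> U = fullv.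

(* apow mul a k = a^(k+1), with a^1 = a and a^(k+1) = a a^k *)
Definition apow (F : fieldType) (d : nat)
  (mul : 'rV[F]_d -> 'rV[F]_d -> 'rV[F]_d) (a : 'rV[F]_d) (k : nat) : 'rV[F]_d :=
  iter k (mul a) a.

(* matrix of L_a : b |-> a b (row-vector convention: b *m La = mul a b) *)
Definition Lmat (F : fieldType) (d : nat)
  (mul : 'rV[F]_d -> 'rV[F]_d -> 'rV[F]_d) (a : 'rV[F]_d) : 'M[F]_d :=
  lin1_mx (mul a).

(* Main.v *)
Require Import Defs.
From HB Require Import structures.
From mathcomp Require Import all_boot all_order all_algebra.
From Stdlib Require Import Classical.
Import Order.TTheory GRing.Theory Num.Theory.
Local Open Scope ring_scope.

Lemma lin1_gen (F : fieldType) n (f : 'rV[F]_n -> 'rV[F]_n)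
  (Hf : forall (k : F) x y, f (k *: x + y) = k *: f x + f y) u :
  u *m lin1_mx f = f u.
Proof.
have f0 : f 0 = 0.
  have := Hf 1 0 0; rewrite !scale1r addr0 => H.
  by apply: (addrI (f 0)); rewrite addr0 -H.
have fZ k x : f (k *: x) = k *: f x by rewrite -[k *: x]addr0 Hf f0 addr0.
have fD x y : f (x + y) = f x + f y by have := Hf 1 x y; rewrite !scale1r.
have fS (I : Type) (r : seq I) (G : I -> 'rV[F]_n) :
    f (\sum_(i <- r) G i) = \sum_(i <- r) f (G i).
  elim: r => [|x r IH]; first by rewrite !big_nil.
  by rewrite !big_cons fD IH.
rewrite [u in RHS]matrix_sum_delta big_ord1 fS; apply/rowP=> i.
by rewrite mxE summxE; apply: eq_bigr => j _; rewrite fZ !mxE.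
Qed.

Lemma ex_min_size (Q : nat -> Prop) : (exists k, Q k) ->
  exists k, Q k /\ forall k', Q k' -> (k <= k')%N.
Proof.
move=> [k Qk]; apply: NNPP => H.
suff: forall j i, (i <= j)%N -> ~ Q i by move/(_ k k (leqnn k)).
elim=> [|j IH] i Hi Qi.
  apply: H; exists i; split=> // k' _; move: Hi; rewrite leqn0 => /eqP->.
  by [].
case: (leqP i j) => [/IH//|Hji].
have Ei : i = j.+1 by apply/eqP; rewrite eqn_leq Hi Hji.
apply: H; exists i; split=> // k' Qk'; rewrite leqNgt; apply/negP=> Hk'.
by apply: (IH k') => //; rewrite -ltnS -Ei.
Qed.
Theorem mainTheorem9 (F : fieldType) (m : nat)
  (mul : 'rV[F]_m.+1 -> 'rV[F]_m.+1 -> 'rV[F]_m.+1) (a : 'rV[F]_m.+1)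
  (Hbil : bilinear_mul mul) (Hleib : left_leibniz mul)
  (Hgen : generated_by mul a)
  (Hbasis : basis_of fullv (mkseq (apow mul a) m.+1))
  (s : nat) (ps : 'I_s -> {poly F}) (ns : 'I_s -> nat)
  (Hirr : forall j, ps j \is monic /\ irreducible_poly (ps j))
  (Hdist : injective ps)
  (Hns : forall j, (0 < ns j)%N)
  (Hfact : char_poly (Lmat mul a) = \prod_(j < s) ps j ^+ ns j)
  (HX : exists j, ps j = 'X) :
  forall U : {vspace 'rV[F]_m.+1},
    is_maximal_subalgebra mul U <->
    exists j : 'I_s, forall b : 'rV[F]_m.+1,
      (b \in U) <->
      b *m horner_mx (Lmat mul a) (char_poly (Lmat mul a) %/ ps j) = 0.
Proof.
case: Hbil => HbL HbR.
set La := Lmat mul a; set P := char_poly La.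
have Lm0l y : mul 0 y = 0.
  have := HbL 1 0 0 y; rewrite !scale1r addr0 => H.
  by apply: (addrI (mul 0 y)); rewrite addr0 -H.
have Lm0r y : mul y 0 = 0.
  have := HbR 1 y 0 0; rewrite !scale1r addr0 => H.
  by apply: (addrI (mul y 0)); rewrite addr0 -H.
have mulZl k x y : mul (k *: x) y = k *: mul x y.
  by rewrite -[k *: x]addr0 HbL Lm0l addr0.
have mulDl x x' y : mul (x + x') y = mul x y + mul x' y.
  by have := HbL 1 x x' y; rewrite !scale1r.
have HLa b : mul a b = b *m La by rewrite /La /Lmat lin1_gen.
pose ev q := a *m horner_mx La q.
have evD p q : ev (p + q) = ev p + ev q by rewrite /ev rmorphD mulmxDr.
have evZ c p : ev (c *: p) = c *: ev p by rewrite /ev horner_mxZ scalemxAr.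
have evM p q : ev (p * q) = ev p *m horner_mx La q by rewrite /ev rmorphM mulmxA.
have evC c : ev c%:P = c *: a by rewrite /ev horner_mx_C mul_mx_scalar.
have evX q : ev (q * 'X) = mul a (ev q) by rewrite evM horner_mx_X HLa.
have evXn k : ev 'X^k = apow mul a k.
  elim: k => [|k IH]; first by rewrite -['X^0]/(1%:P) evC scale1r.
  by rewrite exprSr evX IH.

pose T := mktuple (fun i : 'I_m.+1 => apow mul a i).
have ET : tval T = mkseq (apow mul a) m.+1.
  by rewrite /mkseq -val_enum_ord -map_comp.
have HbT : basis_of fullv T by rewrite ET.
have Ti (i : 'I_m.+1) : T`_i = apow mul a i by rewrite ET nth_mkseq.
have ev0 : ev 0 = 0 by rewrite /ev rmorph0 mulmx0.
have evP (k : nat -> F) :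
    \sum_(i < m.+1) k i *: T`_i = ev (\poly_(i < m.+1) k i).
  rewrite poly_def; apply: (big_ind2 (fun u v => u = ev v)) => //.
    by move=> x1 x2 y1 y2 -> ->; rewrite evD.
  by move=> i _; rewrite evZ evXn Ti.
have Hsurj b : exists q, b = ev q.
  exists (\poly_(i < m.+1) coord T (inord i) b); rewrite -evP.
  under eq_bigr => i _ do rewrite inord_val.
  by apply: coord_span; rewrite (span_basis HbT) memvf.
have HKER q : ev q = 0 <-> P %| q.
  split; last first.
    by case/dvdpP=> qq ->; rewrite evM Cayley_Hamilton mulmx0.
  move=> Hq; apply/modp_eq0P.
  set r := q %% P.
  have Hr : ev r = 0.
    move: Hq; rewrite [in ev q](divp_eq q P) evD evM Cayley_Hamilton mulmx0.
    by rewrite add0r.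
  have szr : (size r <= m.+1)%N.
    have HP0 : P != 0 by rewrite -size_poly_eq0 size_char_poly.
    by have := ltn_modpN0 q HP0; rewrite size_char_poly.
  have Er : r = \poly_(i < m.+1) r`_i.
    apply/polyP=> k; rewrite coef_poly; case: ifP => // /negbT.
    by rewrite -leqNgt => Hk; rewrite nth_default // (leq_trans szr Hk).
  have := basis_free HbT => /freeP /(_ (fun i => r`_i)).
  rewrite evP -Er Hr => /(_ erefl) H0.
  apply/polyP=> k; rewrite coef0 Er coef_poly; case: ifP => // Hk.
  exact: (H0 (Ordinal Hk)).

have HP0 : P != 0 by rewrite -size_poly_eq0 size_char_poly.
have Hdvd j : ps j %| P.
  rewrite /P -/La Hfact (bigD1 j) //= dvdp_mulr //.
  exact: dvdp_exp (Hns j) (dvdpp _).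
have HPr j : P = (P %/ ps j) * ps j by rewrite divpK.
have Hr0 j : P %/ ps j != 0.
  by apply/eqP=> H; move: HP0; rewrite (HPr j) H mul0r eqxx.
have Hmem q j : ev q *m horner_mx La (P %/ ps j) = 0 <-> ps j %| q.
  rewrite -evM HKER {1}(HPr j) mulrC dvdp_mul2r //.
pose Kv j : {vspace 'rV[F]_m.+1} :=
  lker (linfun (mulmxr (horner_mx La (P %/ ps j)))).
have memK b j : (b \in Kv j) = (b *m horner_mx La (P %/ ps j) == 0).
  by rewrite memv_ker lfunE.
have memKev q j : (ev q \in Kv j) = (ps j %| q).
  by rewrite memK; apply/eqP/idP => /Hmem.
have Hsz j : (1 < size (ps j))%N by case: (Hirr j) => _ [].
have G1 j : a \notin Kv j.
  have -> : a = ev 1 by rewrite -polyC1 evC scale1r.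
  rewrite memKev; apply/negP => /(dvdp_leq (oner_neq0 _)).
  by rewrite size_poly1 leqNgt Hsz.
have G1' j : Kv j != fullv.
  by apply/negP => /eqP E; move: (G1 j); rewrite E memvf.
pose inv (V : {vspace 'rV[F]_m.+1}) := forall b, b \in V -> b *m La \in V.
have G2 j : inv (Kv j).
  move=> b; have [q ->] := Hsurj b; rewrite -HLa -evX !memKev.
  exact: dvdp_mulr.
have invP V : inv V -> forall h b, b \in V -> b *m horner_mx La h \in V.
  move=> HV; elim/poly_ind => [|p c IH] b bV.
    by rewrite rmorph0 mulmx0 mem0v.
  rewrite rmorphD rmorphM /= horner_mx_X horner_mx_C -mulmxE mulmxDr.
  by rewrite mulmxA mul_mx_scalar memvD ?memvZ // HV // IH.
case: HX => j1 Hj1.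
have HW0 h y : mul (ev (h * 'X)) y = 0.
  elim/poly_ind: h y => [|p c IH] y; first by rewrite mul0r ev0 Lm0l.
  rewrite mulrDl evD mulDl evX mul_polyC evZ -['X]expr1 evXn /= mulZl.
  have L1 : mul (mul a a) y = 0.
    by apply: (addIr (mul a (mul a y))); rewrite add0r -Hleib.
  have L2 : mul (mul a (ev (p * 'X))) y = 0.
    have := Hleib a (ev (p * 'X)) y; rewrite !IH Lm0r addr0 => H.
    by rewrite -H.
  by rewrite L1 L2 scaler0 addr0.
have HW b : b \in Kv j1 -> forall y, mul b y = 0.
  have [q ->] := Hsurj b; rewrite memKev Hj1 => /dvdpP [h ->] y.
  exact: HW0.
have HDec x : exists c w, x = c *: a + w /\ w \in Kv j1.
  have [q ->] := Hsurj x.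
  have Hs : leq (size (q %% 'X)) 1.
    by move: (ltn_modp q 'X); rewrite polyX_eq0 size_polyX /= => H; exact: H.
  exists (q %% 'X)`_0, (ev (q %/ 'X * 'X)); split.
    by rewrite -evC -size1_polyC // addrC -evD -divp_eq.
  by rewrite memKev Hj1 dvdp_mull.
have HmulDec x y : exists c, mul x y = c *: (y *m La) /\ (x \notin Kv j1 -> c != 0).
  have [c [w [-> Hw]]] := HDec x; exists c.
  rewrite mulDl mulZl (HW w Hw) addr0 HLa; split => //.
  apply: contra => /eqP ->; by rewrite scale0r add0r.

have F2b V : inv V -> is_subalgebra mul V.
  move=> HV x y xV yV; have [c [-> _]] := HmulDec x y.
  by rewrite memvZ // HV.
have F2c V : (V <= Kv j1)%VS -> is_subalgebra mul V.
  by move=> /subvP HV x y xV _; rewrite (HW x (HV x xV)) mem0v.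
have F2a V : is_subalgebra mul V -> ~~ (V <= Kv j1)%VS -> inv V.
  move=> HV Hn.
  have [x xV xK] : exists2 x, x \in V & x \notin Kv j1.
    apply: NNPP => H; apply: (negP Hn); apply/subvP => x xV.
    apply: NNPP => xK; apply: H; exists x => //; exact/negP.
  move=> b bV; have [c [Hc Hc0]] := HmulDec x b.
  have := HV x b xV bV; rewrite Hc => H.
  have -> : b *m La = c^-1 *: (c *: (b *m La)).
    by rewrite scalerA mulVf ?Hc0 // scale1r.
  by rewrite memvZ.
have Ha V : inv V -> a \in V -> V = fullv.
  move=> HV aV; apply/vspaceP => b; rewrite memvf.
  by have [q ->] := Hsurj b; apply: invP.
have Hg V : inv V -> a \notin V -> exists g : {poly F}, [/\ (1 < size g)%N, ev g \in V &
    forall q, ev q \in V -> g %| q].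
  move=> HV aV.
  have Hex : exists k, exists g : {poly F}, [/\ g != 0, ev g \in V & size g = k].
    by exists (size P), P; split=> //; move/HKER: (dvdpp P) ->; rewrite mem0v.
  have [k [[g [g0 gV gk]] kmin]] := ex_min_size _ Hex.
  have gdiv q : ev q \in V -> g %| q.
    move=> qV; apply/modp_eq0P; apply: NNPP => /eqP r0.
    have rV : ev (q %% g) \in V.
      have -> : ev (q %% g) = ev q - ev (g * (q %/ g)).
        by rewrite {2}(divp_eq q g) evD mulrC addrC addKr.
      by rewrite memvB // evM invP.
    have := kmin _ (ex_intro _ (q %% g) (And3 r0 rV erefl)).
    by rewrite -gk leqNgt ltn_modp g0.
  exists g; split=> //.
  rewrite ltn_neqAle size_poly_gt0 g0 andbT; apply/negP => /eqP /esym s1.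
  move: gV; rewrite (size1_polyC (eq_leq s1)) evC => /(memvZ (g`_0)^-1).
  rewrite scalerA mulVf ?scale1r; first by rewrite (negPf aV).
  by rewrite -polyC_eq0 -(size1_polyC (eq_leq s1)).
have Hfac g : g %| P -> (1 < size g)%N -> exists j, ps j %| g.
  move=> gP g1; apply: NNPP => H.
  have cop j : coprimep (ps j) g.
    rewrite coprimep_def; apply/negP => /negP Hs.
    have := (Hirr j).2 (gcdp (ps j) g) Hs (dvdp_gcdl _ _) => E.
    by apply: H; exists j; rewrite -(eqp_dvdl _ E) dvdp_gcdr.
  have cP : coprimep P g.
    rewrite /P -/La Hfact; apply: (big_ind (fun p => coprimep p g)).
    - exact: coprime1p.
    - by move=> x y cx cy; rewrite coprimepMl cx cy.
    - by move=> j _; apply: coprimep_expl.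
  have := coprimep_dvdr gP cP; rewrite coprimepp => /eqP s1.
  by move: g1; rewrite s1.
have G3 V : inv V -> V != fullv -> exists j, (V <= Kv j)%VS.
  move=> HV Vf.
  have aV : a \notin V by apply: contra Vf => aV; rewrite (Ha V HV aV).
  have [g [g1 gV gdiv]] := Hg V HV aV.
  have gP : g %| P by apply: gdiv; move/HKER: (dvdpp P) ->; rewrite mem0v.
  have [j Hj] := Hfac g gP g1; exists j; apply/subvP => b.
  have [q ->] := Hsurj b => qV; rewrite memKev.
  exact: dvdp_trans Hj (gdiv q qV).
have G4 V j : inv V -> (Kv j <= V)%VS -> V = Kv j \/ V = fullv.
  move=> HV HKV; case: (boolP (a \in V)) => aV; first by right; exact: Ha.
  have [g [g1 gV gdiv]] := Hg V HV aV.
  have gp : g %| ps j.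
    by apply: gdiv; apply: (subvP HKV); rewrite memKev dvdpp.
  have E : g %= ps j.
    by apply: (Hirr j).2 => //; rewrite neq_ltn g1 orbT.
  left; apply: subv_anti; rewrite HKV andbT; apply/subvP => b.
  have [q ->] := Hsurj b => qV; rewrite memKev -(eqp_dvdl _ E).
  exact: gdiv.
have G5 j : (Kv j <= Kv j1)%VS -> j = j1.
  move=> /subvP H; have := H (ev (ps j)); rewrite !memKev dvdpp Hj1 => /(_ erefl).
  move=> Xd; apply: Hdist; rewrite Hj1.
  have E : 'X %= ps j by apply: (Hirr j).2 => //; rewrite size_polyX.
  by apply/eqP; rewrite -eqp_monic ?monicX ?(Hirr j).1 // eqp_sym.

move=> U; split.
  case=> HsU HUf Hmax.
  case: (boolP (U <= Kv j1)%VS) => HUW.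
    exists j1 => b.
    have [E|E] := Hmax (Kv j1) (F2b _ (G2 j1)) HUW; last first.
      by move: (G1' j1); rewrite E eqxx.
    by rewrite -E memK; split => /eqP.
  have HU := F2a U HsU HUW.
  have [j HUj] := G3 U HU HUf.
  have [E|E] := Hmax (Kv j) (F2b _ (G2 j)) HUj; last first.
    by move: (G1' j); rewrite E eqxx.
  by exists j => b; rewrite -E memK; split => /eqP.
case=> j Hj.
have -> : U = Kv j.
  apply/vspaceP => b; rewrite memK; apply/idP/idP => [/Hj -> //|/eqP].
  by move/Hj.
split; [exact: F2b _ (G2 j) | exact: G1' |].
move=> V HV HKV.
case: (boolP (V <= Kv j1)%VS) => HVW.
  have Ej := G5 j (subv_trans HKV HVW); subst j.
  by left; apply: subv_anti; rewrite HVW HKV.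
exact: G4 V j (F2a V HV HVW) HKV.
Qed.
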